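(* If $\mathcal E$ is a cofull right functional $A$-module, then the ring $\mathcal K_A(\mathcal E)$ is quadratik and is an essential ideal in itself, i.e. the map $\mathcal K_A(\mathcal E)\to\mathrm{Hom}_{\mathcal K_A(\mathcal E)}(\mathcal K_A(\mathcal E))$, $x\mapsto(y\mapsto xy)$, is injective.
   Context: $G$ is a discrete group; $(A,\alpha)$ is an associative ring (not necessarily commutative or unital) with $G$-action. A ring $R$ is quadratik if every element of $R$ is a finite sum of products $ab$ with $a,b\in R$. A right functional $A$-module is a right $A$-module $\mathcal E$ with a $G$-action $S$ by additive bijections with $S_g(\xi a)=S_g(\xi)\alpha_g(a)$, together with a functional space $\Theta_A(\mathcal E)\subseteq\mathrm{Hom}_A(\mathcal E,A)$ which is a $G$-invariant left $A$-submodule. The compact operators $\mathcal K_A(\mathcal E)$ form the ring of finite sums of operators $\theta_{\eta,\varphi}(\xi)=\eta\varphi(\xi)$ ($\eta\in\mathcal E$, $\varphi\in\Theta_A(\mathcal E)$) under composition. $\mathcal E$ is cofull if every element of $\mathcal E$ is a finite sum of elements $\xi\varphi(\eta)$ with $\xi,\eta\in\mathcal E$, $\varphi\in\Theta_A(\mathcal E)$. *)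

(* Defs.v *)
From mathcomp Require Import all_boot all_algebra.
Set Implicit Arguments. Unset Strict Implicit. Unset Printing Implicit Defensive.
Import GRing.Theory.
Local Open Scope ring_scope.

Record nuring_axioms (A : zmodType) (mul : A -> A -> A) : Prop := {
  nur_mulA : forall a b c, mul a (mul b c) = mul (mul a b) c;
  nur_mulDl : forall a b c, mul (a + b) c = mul a c + mul b c;
  nur_mulDr : forall a b c, mul a (b + c) = mul a b + mul a c }.

Record group_axioms (G : Type) (gm : G -> G -> G) (ge : G) (gi : G -> G)
  : Prop := {
  grp_assoc : forall g h k, gm g (gm h k) = gm (gm g h) k;
  grp_id_l : forall g, gm ge g = g;
  grp_inv_l : forall g, gm (gi g) g = ge }.

Record ring_action_axioms (G : Type) (gm : G -> G -> G) (ge : G)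
  (A : zmodType) (mul : A -> A -> A) (alpha : G -> A -> A) : Prop := {
  ra_add : forall g a b, alpha g (a + b) = alpha g a + alpha g b;
  ra_mul : forall g a b, alpha g (mul a b) = mul (alpha g a) (alpha g b);
  ra_bij : forall g, bijective (alpha g);
  ra_one : forall a, alpha ge a = a;
  ra_comp : forall g h a, alpha (gm g h) a = alpha g (alpha h a) }.

Record rmodule_axioms (A : zmodType) (mul : A -> A -> A) (E : zmodType)
  (act : E -> A -> E) : Prop := {
  rm_addl : forall x y a, act (x + y) a = act x a + act y a;
  rm_addr : forall x a b, act x (a + b) = act x a + act x b;
  rm_assoc : forall x a b, act x (mul a b) = act (act x a) b }.

Definition is_hom (A : zmodType) (mul : A -> A -> A) (E : zmodType)
  (act : E -> A -> E) (phi : E -> A) : Prop :=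
  (forall x y, phi (x + y) = phi x + phi y) /\
  (forall x a, phi (act x a) = mul (phi x) a).

(* G acts on Hom_A(E, A) by
   (g . phi)(x) = alpha_g (phi (S_{g^-1} x)). *)
Record functional_module_axioms (G : Type) (gm : G -> G -> G) (ge : G)
  (gi : G -> G) (A : zmodType) (mul : A -> A -> A) (alpha : G -> A -> A)
  (E : zmodType) (act : E -> A -> E) (S : G -> E -> E)
  (Theta : (E -> A) -> Prop) : Prop := {
  fm_rmod : rmodule_axioms mul act;
  fm_S_add : forall g x y, S g (x + y) = S g x + S g y;
  fm_S_bij : forall g, bijective (S g);
  fm_S_one : forall x, S ge x = x;
  fm_S_comp : forall g h x, S (gm g h) x = S g (S h x);
  fm_S_act : forall g x a, S g (act x a) = act (S g x) (alpha g a);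
  fm_Theta_hom : forall phi, Theta phi -> is_hom mul act phi;
  fm_Theta_0 : Theta (fun _ => 0);
  fm_Theta_add : forall phi psi, Theta phi -> Theta psi ->
      Theta (fun x => phi x + psi x);
  fm_Theta_opp : forall phi, Theta phi -> Theta (fun x => - phi x);
  fm_Theta_scale : forall a phi, Theta phi -> Theta (fun x => mul a (phi x));
  fm_Theta_inv : forall g phi, Theta phi ->
      Theta (fun x => alpha g (phi (S (gi g) x))) }.

(* T is in K_A(E): a finite sum of theta_{eta,phi}, phi in Theta. *)
Definition compact_op (A : zmodType) (E : zmodType) (act : E -> A -> E)
  (Theta : (E -> A) -> Prop) (T : E -> E) : Prop :=
  exists (n : nat) (eta : 'I_n -> E) (phi : 'I_n -> E -> A),
    (forall i, Theta (phi i)) /\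
    T = (fun x => \sum_(i < n) act (eta i) (phi i x)).

Definition cofull (A : zmodType) (E : zmodType) (act : E -> A -> E)
  (Theta : (E -> A) -> Prop) : Prop :=
  forall z : E, exists (n : nat) (xi eta : 'I_n -> E) (phi : 'I_n -> E -> A),
    (forall i, Theta (phi i)) /\
    z = \sum_(i < n) act (xi i) (phi i (eta i)).

(* The ring K_A(E) (operations: pointwise sum, composition) is quadratik. *)
Definition compact_quadratik (A : zmodType) (E : zmodType)
  (act : E -> A -> E) (Theta : (E -> A) -> Prop) : Prop :=
  forall T, compact_op act Theta T ->
    exists (n : nat) (x y : 'I_n -> E -> E),
      (forall i, compact_op act Theta (x i) /\ compact_op act Theta (y i)) /\
      T = (fun z => \sum_(i < n) x i (y i z)).

Definition compact_self_essential (A : zmodType) (E : zmodType)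
  (act : E -> A -> E) (Theta : (E -> A) -> Prop) : Prop :=
  forall x x' : E -> E, compact_op act Theta x -> compact_op act Theta x' ->
    (forall y, compact_op act Theta y -> (fun z => x (y z)) = (fun z => x' (y z))) ->
    x = x'.

(* Main.v *)
Require Import Defs.
From mathcomp Require Import all_boot all_algebra.
From Stdlib Require Import FunctionalExtensionality.
Set Implicit Arguments. Unset Strict Implicit.
Import GRing.Theory.
Local Open Scope ring_scope.

Section Aux.
Variables (A : zmodType) (mul : A -> A -> A) (E : zmodType)
  (act : E -> A -> E) (Theta : (E -> A) -> Prop).
Hypothesis Hm : rmodule_axioms mul act.
Hypothesis Hth : forall phi, Theta phi -> is_hom mul act phi.

Lemma act0l a : act 0 a = 0.
Proof.
have h := rm_addl Hm 0 0 a; rewrite addr0 in h.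
by apply: (addrI (act 0 a)); rewrite addr0 -h.
Qed.

Lemma act0r x : act x 0 = 0.
Proof.
have h := rm_addr Hm x 0 0; rewrite addr0 in h.
by apply: (addrI (act x 0)); rewrite addr0 -h.
Qed.

Lemma act_suml I (r : seq I) (P : pred I) (F : I -> E) a :
  act (\sum_(i <- r | P i) F i) a = \sum_(i <- r | P i) act (F i) a.
Proof.
exact: (big_morph (fun x => act x a) (fun x y => rm_addl Hm x y a) (act0l a)).
Qed.

Lemma hom0 phi : Theta phi -> phi 0 = 0.
Proof.
move=> /Hth [h _]; have := h 0 0; rewrite addr0 => e.
by apply: (addrI (phi 0)); rewrite addr0 -e.
Qed.

Lemma cop_add T : compact_op act Theta T ->
  (forall x y, T (x + y) = T x + T y) /\ T 0 = 0.
Proof.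
move=> [n [eta [phi [Hp ->]]]]; split.
  move=> x y; rewrite -big_split /=; apply: eq_bigr => i _.
  by have [h _] := Hth (Hp i); rewrite h (rm_addr Hm).
by rewrite big1 // => i _; rewrite hom0 // act0r.
Qed.

Lemma cop_sum T n (F : 'I_n -> E) : compact_op act Theta T ->
  T (\sum_(i < n) F i) = \sum_(i < n) T (F i).
Proof.
move=> /cop_add [h1 h0].
exact: (big_morph T h1 h0).
Qed.

Definition Q (T : E -> E) := exists (n : nat) (x y : 'I_n -> E -> E),
      (forall i, compact_op act Theta (x i) /\ compact_op act Theta (y i)) /\
      T = (fun z => \sum_(i < n) x i (y i z)).

Lemma Q0 : Q (fun _ => 0).
Proof.
exists 0%N, (fun _ => id), (fun _ => id); split; first by case.
by apply: functional_extensionality => z; rewrite big_ord0.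
Qed.

Lemma QD f g : Q f -> Q g -> Q (fun z => f z + g z).
Proof.
move=> [n [x [y [Hxy ->]]]] [m [x' [y' [Hxy' ->]]]].
exists (n + m)%N,
  (fun i => match split i with inl j => x j | inr j => x' j end),
  (fun i => match split i with inl j => y j | inr j => y' j end).
split.
  by move=> i; case: (split i) => j; [apply: Hxy | apply: Hxy'].
apply: functional_extensionality => z; rewrite big_split_ord /=.
congr (_ + _); apply: eq_bigr => i _.
  by rewrite (unsplitK (inl i) : split (lshift m i) = inl i).
by rewrite (unsplitK (inr i) : split (rshift n i) = inr i).
Qed.

Lemma Qsum n (F : 'I_n -> E -> E) : (forall i, Q (F i)) ->
  Q (fun z => \sum_(i < n) F i z).
Proof.
elim: n F => [|n IH] F HF.
  have -> : (fun z => \sum_(i < 0) F i z) = (fun _ => 0).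
    by apply: functional_extensionality => z; rewrite big_ord0.
  exact: Q0.
have -> : (fun z => \sum_(i < n.+1) F i z) =
  (fun z => (fun z => \sum_(i < n) F (widen_ord (leqnSn n) i) z) z + F ord_max z).
  by apply: functional_extensionality => z; rewrite big_ord_recr.
apply: QD; last exact: HF.
by apply: IH => i; apply: HF.
Qed.

Lemma cop_single xi phi : Theta phi -> compact_op act Theta (fun w => act xi (phi w)).
Proof.
move=> Hp; exists 1%N, (fun _ => xi), (fun _ => phi); split => //.
by apply: functional_extensionality => z; rewrite big_ord1.
Qed.

Hypothesis Hcf : cofull act Theta.

Lemma Qsingle eta phi : Theta phi -> Q (fun z => act eta (phi z)).
Proof.
move=> Hp; have [n [xi [zeta [phi' [Hp' Heta]]]]] := Hcf eta.
have -> : (fun z => act eta (phi z)) =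
  (fun z => \sum_(j < n) (fun z => act (xi j) (phi' j (act (zeta j) (phi z)))) z).
  apply: functional_extensionality => z; rewrite Heta act_suml.
  apply: eq_bigr => j _; have [_ h] := Hth (Hp' j).
  by rewrite h (rm_assoc Hm).
apply: Qsum => j.
exists 1%N, (fun _ => fun w => act (xi j) (phi' j w)), (fun _ => fun z => act (zeta j) (phi z)).
split; first by move=> _; split; apply: cop_single.
by apply: functional_extensionality => z; rewrite big_ord1.
Qed.

End Aux.

Theorem lemma2p14 (G : Type) (gm : G -> G -> G) (ge : G) (gi : G -> G)
  (A : zmodType) (mul : A -> A -> A) (alpha : G -> A -> A)
  (E : zmodType) (act : E -> A -> E) (S : G -> E -> E)
  (Theta : (E -> A) -> Prop) :
  group_axioms gm ge gi ->
  nuring_axioms mul ->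
  ring_action_axioms gm ge mul alpha ->
  functional_module_axioms gm ge gi mul alpha act S Theta ->
  cofull act Theta ->
  compact_quadratik act Theta /\ compact_self_essential act Theta.
Proof.
move=> _ _ _ Hf Hcf.
have Hm := fm_rmod Hf.
have Hth := fm_Theta_hom Hf.
split.
  move=> T [n [eta [phi [Hp ->]]]].
  apply: Qsum => // i.
  exact: (Qsingle Hm Hth Hcf).
move=> x x' Hx Hx' H.
apply: functional_extensionality => z.
have [n [xi [eta [phi [Hp ->]]]]] := Hcf z.
rewrite (cop_sum Hm Hth _ Hx) (cop_sum Hm Hth _ Hx').
apply: eq_bigr => j _.
have := H _ (cop_single act (xi j) (Hp j)).
by move/(congr1 (fun f => f (eta j))).
Qed.
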